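(* Let $\alpha\le\omega$ and let $\mathcal A=((A_i,<_{A_i})\mid i<\alpha)$ and $\mathcal B=((B_i,<_{B_i})\mid i<\alpha)$ be sequences of countable linear orders shuffled by families $\mathcal S_A=(S^A_{i,j}\mid i<j<\alpha)$ and $\mathcal S_B=(S^B_{i,j}\mid i<j<\alpha)$ respectively. The following are equivalent: (1) the limit structures $(\bigsqcup_{\mathcal S_A}\mathcal A,\subset,\pi^A_i(A_i))_{i<\alpha}$ and $(\bigsqcup_{\mathcal S_B}\mathcal B,\subset,\pi^B_i(B_i))_{i<\alpha}$ are isomorphic; (2) there are order isomorphisms $f_i:A_i\to B_i$ ($i<\alpha$) such that for all $i<j<\alpha$, $x\in A_i$, $y\in A_j$: $(x,y)\in S^A_{i,j}$ iff $(f_i(x),f_j(y))\in S^B_{i,j}$; (3) $(A_i,<_{A_i})\cong(B_i,<_{B_i})$ for all $i<\alpha$.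
   Context: For a relation $S\subseteq X\times Y$, $S(X,y)=\{x:(x,y)\in S\}$ and $S(x,Y)=\{y:(x,y)\in S\}$. A shuffling relation between linear orders $(X,<_X),(Y,<_Y)$ is a non-empty $S\subseteq X\times Y$ such that (1) $(S(X,y)\mid y\in Y)$ is a strictly increasing sequence of initial segments of $X$, none of which has a supremum in $X$, and (2) $(S(x,Y)\mid x\in X)$ is a strictly decreasing sequence of final segments of $Y$. A family $(S_{i,j}\subseteq A_i\times A_j\mid i<j<\alpha)$ shuffles $((A_i,<_i)\mid i<\alpha)$ if each $S_{i,j}$ is a shuffling relation between $A_i$ and $A_j$ and $S_{j,k}\circ S_{i,j}=S_{i,k}$ for all $i<j<k<\alpha$ (composition: $(a,c)\in S_{j,k}\circ S_{i,j}$ iff there is $b$ with $(a,b)\in S_{i,j}$, $(b,c)\in S_{j,k}$). For a dense linear order $A_0$, $\mathfrak D(A_0)$ is the set of all topologically open initial segments of $A_0$ (including $\emptyset$, excluding $A_0$ if it has a maximum), ordered by $\subset$. The canonical maps are $\pi_0(x)=\{y\in A_0:y<x\}$ and $\pi_i(x)=S_{0,i}(A_0,x)$ for $i>0$; the limit structure is $\bigsqcup_{\mathcal S}\mathcal A=\bigcup_{i<\alpha}\pi_i(A_i)\subseteq\mathfrak D(A_0)$, ordered by $\subset$ and with a unary predicate for each $\pi_i(A_i)$. *)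

(* Defs.v *)
From Stdlib Require Import Arith.

(* An ordinal alpha <= omega: [Some n] is the finite ordinal n, [None] is omega. *)
Definition below (alpha : option nat) (i : nat) : Prop :=
  match alpha with None => True | Some n => i < n end.

Definition strict_linear_order {X : Type} (lt : X -> X -> Prop) : Prop :=
  (forall x, ~ lt x x) /\
  (forall x y z, lt x y -> lt y z -> lt x z) /\
  (forall x y, x = y \/ lt x y \/ lt y x).

Definition countable (X : Type) : Prop :=
  exists g : X -> nat, forall x y, g x = g y -> x = y.

Definition le_of {X : Type} (lt : X -> X -> Prop) (x y : X) : Prop := lt x y \/ x = y.

Definition initial_segment {X : Type} (lt : X -> X -> Prop) (P : X -> Prop) : Prop :=
  forall x y, lt x y -> P y -> P x.

Definition final_segment {X : Type} (lt : X -> X -> Prop) (P : X -> Prop) : Prop :=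
  forall x y, lt x y -> P x -> P y.

Definition subset {X : Type} (P Q : X -> Prop) : Prop := forall x, P x -> Q x.

Definition strict_subset {X : Type} (P Q : X -> Prop) : Prop :=
  subset P Q /\ exists x, Q x /\ ~ P x.

Definition is_supremum {X : Type} (lt : X -> X -> Prop) (P : X -> Prop) (s : X) : Prop :=
  (forall x, P x -> le_of lt x s) /\
  (forall u, (forall x, P x -> le_of lt x u) -> le_of lt s u).

Definition shuffling_relation {X Y : Type} (ltX : X -> X -> Prop) (ltY : Y -> Y -> Prop)
    (S : X -> Y -> Prop) : Prop :=
  (exists x y, S x y) /\
  (forall y, initial_segment ltX (fun x => S x y)) /\
  (forall y y', ltY y y' -> strict_subset (fun x => S x y) (fun x => S x y')) /\
  (forall y, ~ exists s, is_supremum ltX (fun x => S x y) s) /\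
  (forall x, final_segment ltY (fun y => S x y)) /\
  (forall x x', ltX x x' -> strict_subset (fun y => S x' y) (fun y => S x y)).

Definition shuffles (alpha : option nat) (A : nat -> Type)
    (ltA : forall i, A i -> A i -> Prop) (SA : forall i j, A i -> A j -> Prop) : Prop :=
  (forall i j, i < j -> below alpha j -> shuffling_relation (ltA i) (ltA j) (SA i j)) /\
  (forall i j k, i < j -> j < k -> below alpha k ->
     forall (a : A i) (c : A k), SA i k a c <-> exists b : A j, SA i j a b /\ SA j k b c).

Definition canon_map (A : nat -> Type) (ltA : forall i, A i -> A i -> Prop)
    (SA : forall i j, A i -> A j -> Prop) (i : nat) : A i -> (A 0 -> Prop) :=
  match i as n return A n -> (A 0 -> Prop) with
  | 0 => fun x a => ltA 0 a x
  | S m => fun x a => SA 0 (S m) a x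
  end.

Definition in_level (A : nat -> Type) (ltA : forall i, A i -> A i -> Prop)
    (SA : forall i j, A i -> A j -> Prop) (i : nat) (D : A 0 -> Prop) : Prop :=
  exists x : A i, D = canon_map A ltA SA i x.

Definition limit_carrier (alpha : option nat) (A : nat -> Type)
    (ltA : forall i, A i -> A i -> Prop) (SA : forall i j, A i -> A j -> Prop)
    (D : A 0 -> Prop) : Prop :=
  exists i, below alpha i /\ in_level A ltA SA i D.

Definition limit_structure (alpha : option nat) (A : nat -> Type)
    (ltA : forall i, A i -> A i -> Prop) (SA : forall i j, A i -> A j -> Prop) : Type :=
  { D : A 0 -> Prop | limit_carrier alpha A ltA SA D }.

Definition limits_isomorphic (alpha : option nat)
    (A : nat -> Type) (ltA : forall i, A i -> A i -> Prop) (SA : forall i j, A i -> A j -> Prop)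
    (B : nat -> Type) (ltB : forall i, B i -> B i -> Prop) (SB : forall i j, B i -> B j -> Prop)
    : Prop :=
  exists (F : limit_structure alpha A ltA SA -> limit_structure alpha B ltB SB)
         (G : limit_structure alpha B ltB SB -> limit_structure alpha A ltA SA),
    (forall D, G (F D) = D) /\ (forall E, F (G E) = E) /\
    (forall D D', subset (proj1_sig D) (proj1_sig D') <->
                  subset (proj1_sig (F D)) (proj1_sig (F D'))) /\
    (forall i, below alpha i -> forall D,
        in_level A ltA SA i (proj1_sig D) <-> in_level B ltB SB i (proj1_sig (F D))).

Definition order_iso {X Y : Type} (ltX : X -> X -> Prop) (ltY : Y -> Y -> Prop)
    (f : X -> Y) : Prop :=
  (exists g : Y -> X, (forall x, g (f x) = x) /\ (forall y, f (g y) = y)) /\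
  (forall x x', ltX x x' <-> ltY (f x) (f x')).

(* Main.v *)
Require Import Defs.
From Stdlib Require Import Arith Lia List Classical ClassicalEpsilon ProofIrrelevance Eqdep_dec Cantor.

Lemma ss_irrefl {X} (P : X -> Prop) : ~ strict_subset P P.
Proof. intros [_ [a [h1 h2]]]; tauto. Qed.

Lemma ss_not_sub {X} (P Q : X -> Prop) : strict_subset P Q -> subset Q P -> False.
Proof. intros [_ [a [h1 h2]]] h; apply h2, h, h1. Qed.

Lemma ss_asym {X} (P Q : X -> Prop) : strict_subset P Q -> strict_subset Q P -> False.
Proof. intros h [h' _]; exact (ss_not_sub _ _ h h'). Qed.

Lemma ss_trans {X} (P Q R : X -> Prop) : strict_subset P Q -> strict_subset Q R -> strict_subset P R.
Proof.
  intros [h1 [a [ha1 ha2]]] [h2 _]. split.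
  - intros x hx; apply h2, h1, hx.
  - exists a; split; auto.
Qed.

Lemma init_compar {X} (lt : X -> X -> Prop) (P Q : X -> Prop) :
  strict_linear_order lt -> initial_segment lt P -> initial_segment lt Q ->
  subset P Q \/ subset Q P.
Proof.
  intros [_ [_ htri]] hP hQ.
  destruct (classic (subset P Q)) as [h|h]; [left; exact h|right].
  apply not_all_ex_not in h; destruct h as [a ha].
  apply imply_to_and in ha; destruct ha as [haP haQ].
  intros b hb. destruct (htri a b) as [e|[e|e]].
  - subst; contradiction.
  - exfalso; apply haQ, (hQ a b e hb).
  - exact (hP b a e haP).
Qed.

Lemma not_sub_witness {X} (P Q : X -> Prop) : ~ subset P Q -> exists a, P a /\ ~ Q a.
Proof.
  intros h; apply not_all_ex_not in h; destruct h as [a ha].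
  apply imply_to_and in ha; eauto.
Qed.

Section SR.
Context {X Y : Type} (ltX : X -> X -> Prop) (ltY : Y -> Y -> Prop) (S : X -> Y -> Prop)
  (linX : strict_linear_order ltX) (linY : strict_linear_order ltY)
  (hS : shuffling_relation ltX ltY S).

Lemma sr_nomax x y : S x y -> exists x', ltX x x' /\ S x' y.
Proof.
  intros hxy. destruct hS as [_ [_ [_ [hns _]]]].
  destruct linX as [_ [_ htri]].
  apply NNPP; intros hn. apply (hns y). exists x. split.
  - intros w hw. destruct (htri w x) as [e|[e|e]].
    + right; exact e.
    + left; exact e.
    + exfalso; apply hn; eauto.
  - intros u hu. apply hu, hxy.
Qed.

Lemma sr_nomin x y : ~ S x y -> exists x', ltX x' x /\ ~ S x' y.
Proof.
  intros hxy. destruct hS as [_ [hinit [_ [hns _]]]].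
  destruct linX as [_ [_ htri]].
  apply NNPP; intros hn. apply (hns y).
  destruct (classic (exists u, S u y /\ forall w, S w y -> le_of ltX w u)) as [[u [hu1 hu2]]|hm].
  - exists u; split; [exact hu2| intros v hv; apply hv, hu1].
  - exists x. split.
    + intros w hw. destruct (htri w x) as [e|[e|e]].
      * right; exact e.
      * left; exact e.
      * exfalso; apply hxy, (hinit y x w e hw).
    + intros u hu. destruct (htri x u) as [e|[e|e]].
      * right; exact e.
      * left; exact e.
      * exfalso. assert (S u y) by (apply NNPP; intro hnu; apply hn; eauto).
        apply hm; eauto.
Qed.

Lemma sr_below x y : S x y -> exists y', ltY y' y /\ S x y'.
Proof.
  intros hxy. destruct (sr_nomax x y hxy) as [x' [hx hx']].
  destruct hS as [_ [_ [_ [_ [hfin hdec]]]]].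
  destruct (hdec x x' hx) as [_ [y' [h1 h2]]].
  destruct linY as [_ [_ htri]].
  exists y'. destruct (htri y' y) as [e|[e|e]].
  - subst; contradiction.
  - split; [exact e | exact h1].
  - exfalso; apply h2, (hfin x' y y' e hx').
Qed.

Lemma sr_above x y : ~ S x y -> exists y', ltY y y' /\ ~ S x y'.
Proof.
  intros hxy. destruct (sr_nomin x y hxy) as [x' [hx hx']].
  destruct hS as [_ [_ [_ [_ [hfin hdec]]]]].
  destruct (hdec x' x hx) as [_ [y' [h1 h2]]].
  destruct linY as [_ [_ htri]].
  exists y'. destruct (htri y' y) as [e|[e|e]].
  - subst; contradiction.
  - exfalso; apply hx', (hfin x' y' y e h1).
  - split; auto.
Qed.
End SR.

Lemma below_mono alpha i j : j <= i -> below alpha i -> below alpha j.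
Proof. destruct alpha; simpl; auto; lia. Qed.

Section Sys.
Context (alpha : option nat) (A : nat -> Type) (ltA : forall i, A i -> A i -> Prop)
  (SA : forall i j, A i -> A j -> Prop)
  (Hlin : forall i, below alpha i -> strict_linear_order (ltA i))
  (Hsh : shuffles alpha A ltA SA).

Definition pi i (x : A i) := canon_map A ltA SA i x.
Definition ltP i (x : A i) j (y : A j) := strict_subset (pi i x) (pi j y).

Lemma shr i j : i < j -> below alpha j -> shuffling_relation (ltA i) (ltA j) (SA i j).
Proof. intros; apply Hsh; auto. Qed.

Lemma comp i j k : i < j -> j < k -> below alpha k ->
  forall a c, SA i k a c <-> exists b, SA i j a b /\ SA j k b c.
Proof. intros; apply Hsh; auto. Qed.

Lemma lin i : below alpha i -> strict_linear_order (ltA i).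
Proof. apply Hlin. Qed.

Lemma lt_irr i (x : A i) : below alpha i -> ~ ltA i x x.
Proof. intros h; apply (proj1 (lin i h)). Qed.
Lemma lt_tr i (x y z : A i) : below alpha i -> ltA i x y -> ltA i y z -> ltA i x z.
Proof. intros h; apply (proj1 (proj2 (lin i h))). Qed.
Lemma lt_tri i (x y : A i) : below alpha i -> x = y \/ ltA i x y \/ ltA i y x.
Proof. intros h; apply (proj2 (proj2 (lin i h))). Qed.

Lemma pi_init i (x : A i) : below alpha i -> initial_segment (ltA 0) (pi i x).
Proof.
  intros hi. destruct i as [|m].
  - intros a b hab hb. unfold pi in *; simpl in *. eapply lt_tr; eauto.
  - destruct (shr 0 (S m)) as [_ [hinit _]]; [lia|exact hi|exact (hinit x)].
Qed.

Lemma compar i (x : A i) j (y : A j) : below alpha i -> below alpha j ->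
  subset (pi i x) (pi j y) \/ subset (pi j y) (pi i x).
Proof.
  intros hi hj. apply (init_compar (ltA 0)); auto using pi_init.
  apply lin, (below_mono alpha i); auto; lia.
Qed.

Lemma notltP i (x : A i) j (y : A j) : below alpha i -> below alpha j ->
  (~ ltP j y i x <-> subset (pi i x) (pi j y)).
Proof.
  intros hi hj. split.
  - intros h. apply NNPP; intros hn. apply h.
    destruct (compar i x j y hi hj) as [h'|h']; [contradiction|].
    split; auto. apply not_sub_witness; auto.
  - intros h h'. exact (ss_not_sub _ _ h' h).
Qed.

Lemma L1 i (x x' : A i) : below alpha i -> (ltA i x x' <-> ltP i x i x').
Proof.
  intros hi.
  assert (fwd : forall x x', ltA i x x' -> ltP i x i x').
  { clear x x'. intros x x' h. destruct i as [|m].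
    - unfold ltP, pi; simpl. split.
      + intros a ha. eapply lt_tr; eauto.
      + exists x. split; auto. apply lt_irr; auto.
    - destruct (shr 0 (S m)) as [_ [_ [hinc _]]]; [lia|exact hi|exact (hinc x x' h)]. }
  split; auto.
  intros h. destruct (lt_tri i x x' hi) as [e|[e|e]]; auto.
  - subst. exfalso; exact (ss_irrefl _ h).
  - exfalso. exact (ss_asym _ _ h (fwd _ _ e)).
Qed.

Lemma L2 i j (x : A i) (y : A j) : i < j -> below alpha j -> (SA i j x y <-> ltP i x j y).
Proof.
  intros hij hj.
  assert (hi : below alpha i) by (apply (below_mono alpha j); auto; lia).
  pose proof (shr i j hij hj) as hS.
  destruct hS as [_ [hinit [_ [_ [hfin _]]]]].
  destruct j as [|j']; [lia|].
  destruct i as [|i'].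
  - unfold ltP, pi; simpl. split.
    + intros hxy. split.
      * intros a ha. exact (hinit _ a x ha hxy).
      * destruct (sr_nomax (ltA 0) (ltA (S j')) _ (lin 0 hi) (shr 0 (S j') hij hj) x y hxy)
          as [x' [h1 h2]].
        exists x'; split; auto. intros h3. apply (lt_irr 0 x hi). eapply lt_tr; eauto.
    + intros [hsub [a [ha1 ha2]]]. apply NNPP; intros hn.
      destruct (lt_tri 0 a x hi) as [e|[e|e]].
      * subst; contradiction.
      * contradiction.
      * apply hn, (hinit _ x a e ha1).
  - assert (h0i : 0 < S i') by lia.
    pose proof (comp 0 (S i') (S j') h0i hij hj) as hc.
    unfold ltP, pi; simpl. split.
    + intros hxy. split.
      * intros a ha. apply hc. eauto.
      * destruct (sr_nomax (ltA (S i')) (ltA (S j')) _ (lin _ hi) (shr _ _ hij hj) x y hxy)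
          as [x' [h1 h2]].
        destruct (shr 0 (S i') h0i hi) as [_ [_ [hinc _]]].
        destruct (hinc x x' h1) as [_ [a [ha1 ha2]]].
        exists a; split; auto. apply hc; eauto.
    + intros [hsub [a [ha1 ha2]]]. apply NNPP; intros hn.
      apply hc in ha1. destruct ha1 as [b [hb1 hb2]].
      destruct (shr 0 (S i') h0i hi) as [_ [_ [_ [_ [hfin0 _]]]]].
      destruct (lt_tri _ b x hi) as [e|[e|e]].
      * subst; contradiction.
      * apply ha2, (hfin0 a b x e hb1).
      * apply hn, (hinit _ x b e hb2).
Qed.

Lemma L3a i j (x : A i) (y : A j) : i < j -> below alpha j ->
  subset (pi i x) (pi j y) -> subset (pi j y) (pi i x) -> False.
Proof.
  intros hij hj h1 h2.
  assert (hi : below alpha i) by (apply (below_mono alpha j); auto; lia).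
  destruct (classic (SA i j x y)) as [hs|hs].
  - apply (L2 i j x y hij hj) in hs. exact (ss_not_sub _ _ hs h2).
  - destruct (sr_nomin (ltA i) (ltA j) _ (lin i hi) (shr i j hij hj) x y hs) as [x' [hx1 hx2]].
    pose proof (shr i j hij hj) as [_ [hinit _]].
    destruct j as [|j']; [lia|].
    destruct i as [|i'].
    + apply hx2. apply (h1 x'). unfold pi; simpl. exact hx1.
    + assert (h0i : 0 < S i') by lia.
      pose proof (comp 0 (S i') (S j') h0i hij hj) as hc.
      destruct (shr 0 (S i') h0i hi) as [_ [_ [hinc [_ [hfin0 _]]]]].
      destruct (hinc x' x hx1) as [_ [a [ha1 ha2]]].
      assert (ha3 : pi (S j') y a) by (apply h1; exact ha1).
      unfold pi in ha3; simpl in ha3. apply hc in ha3. destruct ha3 as [b [hb1 hb2]].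
      destruct (lt_tri _ b x' hi) as [e|[e|e]].
      * subst; contradiction.
      * apply ha2, (hfin0 a b x' e hb1).
      * apply hx2, (hinit _ x' b e hb2).
Qed.

Lemma L3 i (x : A i) j (y : A j) : below alpha i -> below alpha j ->
  subset (pi i x) (pi j y) -> subset (pi j y) (pi i x) -> existT A i x = existT A j y.
Proof.
  intros hi hj h1 h2. destruct (lt_eq_lt_dec i j) as [[e|e]|e].
  - exfalso; exact (L3a i j x y e hj h1 h2).
  - subst. destruct (lt_tri j x y hi) as [e|[e|e]].
    + subst; reflexivity.
    + apply (L1 j x y hi) in e. exfalso; exact (ss_not_sub _ _ e h2).
    + apply (L1 j y x hi) in e. exfalso; exact (ss_not_sub _ _ e h1).
  - exfalso; exact (L3a j i y x e hi h2 h1).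
Qed.

Lemma tri i (x : A i) j (y : A j) : below alpha i -> below alpha j ->
  ltP i x j y \/ existT A i x = existT A j y \/ ltP j y i x.
Proof.
  intros hi hj.
  destruct (classic (ltP i x j y)) as [h|h]; [left; auto|].
  destruct (classic (ltP j y i x)) as [h'|h']; [right; right; auto|].
  right; left. apply notltP in h; auto. apply notltP in h'; auto. apply L3; auto.
Qed.

Lemma L5 i j (x : A i) (y : A j) : i < j -> below alpha j -> (~ SA i j x y <-> ltP j y i x).
Proof.
  intros hij hj.
  assert (hi : below alpha i) by (apply (below_mono alpha j); auto; lia).
  split.
  - intros hn. destruct (tri i x j y hi hj) as [h|[h|h]]; auto.
    + apply (L2 i j x y hij hj) in h; contradiction.
    + apply (f_equal (@projT1 _ _)) in h; simpl in h; lia.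
  - intros h hs. apply (L2 i j x y hij hj) in hs. exact (ss_asym _ _ h hs).
Qed.

Lemma Hdiff i j (x : A i) (y : A j) : i <> j -> below alpha i -> below alpha j ->
  ltP i x j y -> exists x' : A i, ltP i x i x' /\ ltP i x' j y.
Proof.
  intros hne hi hj h. destruct (lt_eq_lt_dec i j) as [[e|e]|e]; [|contradiction|].
  - apply (L2 i j x y e hj) in h.
    destruct (sr_nomax (ltA i) (ltA j) _ (lin i hi) (shr i j e hj) x y h) as [x' [h1 h2]].
    exists x'. split; [apply L1; auto|apply L2; auto].
  - apply (L5 j i y x e hi) in h.
    destruct (sr_above (ltA j) (ltA i) _ (lin j hj) (lin i hi) (shr j i e hi) y x h)
      as [x' [h1 h2]].
    exists x'. split; [apply L1; auto|apply (L5 j i y x' e hi); auto].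
Qed.

Lemma D1 i k (x x' : A i) : k <> i -> below alpha i -> below alpha k -> ltA i x x' ->
  exists z : A k, ltP i x k z /\ ltP k z i x'.
Proof.
  intros hne hi hk h. destruct (lt_eq_lt_dec i k) as [[e|e]|e]; [|subst; contradiction|].
  - destruct (shr i k e hk) as [_ [_ [_ [_ [_ hdec]]]]].
    destruct (hdec x x' h) as [_ [z [h1 h2]]].
    exists z. split; [apply L2; auto|apply (L5 i k x' z e hk); auto].
  - destruct (shr k i e hi) as [_ [_ [hinc _]]].
    destruct (hinc x x' h) as [_ [z [h1 h2]]].
    exists z. split; [apply (L5 k i z x e hi); auto|apply L2; auto].
Qed.

Lemma Hsame (h1 : below alpha 1) i k (x x' : A i) : below alpha i -> below alpha k ->
  ltA i x x' -> exists z : A k, ltP i x k z /\ ltP k z i x'.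
Proof.
  intros hi hk h. destruct (Nat.eq_dec k i) as [e|e].
  - subst k. set (k' := if Nat.eq_dec i 0 then 1 else 0).
    assert (hk' : k' <> i) by (unfold k'; destruct (Nat.eq_dec i 0); lia).
    assert (hbk' : below alpha k') by (unfold k'; destruct (Nat.eq_dec i 0);
      [auto| apply (below_mono alpha 1); auto; lia]).
    destruct (D1 i k' x x' hk' hi hbk' h) as [w [hw1 hw2]].
    destruct (Hdiff i k' x w (not_eq_sym hk') hi hbk' hw1) as [x'' [hx1 hx2]].
    exists x''. split; auto. eapply ss_trans; eauto.
  - apply D1; auto.
Qed.

Lemma dense (h1 : below alpha 1) i j k (x : A i) (y : A j) :
  below alpha i -> below alpha j -> below alpha k -> ltP i x j y ->
  exists z : A k, ltP i x k z /\ ltP k z j y.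
Proof.
  intros hi hj hk h. destruct (Nat.eq_dec i j) as [e|e].
  - subst j. apply L1 in h; auto. apply Hsame; auto.
  - destruct (Hdiff i j x y e hi hj h) as [x' [hx1 hx2]].
    apply L1 in hx1; auto.
    destruct (Hsame h1 i k x x' hi hk hx1) as [z [hz1 hz2]].
    exists z; split; auto. eapply ss_trans; eauto.
Qed.

End Sys.

Definition isMin {X} (lt : X -> X -> Prop) x := forall u, ~ lt u x.
Definition isMax {X} (lt : X -> X -> Prop) x := forall u, ~ lt x u.

Definition good {L M} (ltL : L -> L -> Prop) (ltM : M -> M -> Prop) (cL : L -> nat) (cM : M -> nat)
  (P : list (L * M)) : Prop :=
  (forall a b a' b', In (a,b) P -> In (a',b') P -> (ltL a a' <-> ltM b b')) /\
  (forall a b, In (a,b) P -> cL a = cM b /\ (isMin ltL a <-> isMin ltM b) /\ (isMax ltL a <-> isMax ltM b)).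

Lemma flip_lin {X} (lt : X -> X -> Prop) : strict_linear_order lt -> strict_linear_order (fun x y => lt y x).
Proof.
  intros [h1 [h2 h3]]. split; [|split]; auto.
  - intros x y z a b; eauto.
  - intros x y; destruct (h3 x y) as [e|[e|e]]; auto.
Qed.

Lemma maxl {L M} (lt : L -> L -> Prop) (lin : strict_linear_order lt) (Q : L -> Prop) (P : list (L * M)) :
  (forall p, In p P -> ~ Q (fst p)) \/
  exists p, In p P /\ Q (fst p) /\ forall p', In p' P -> Q (fst p') -> le_of lt (fst p') (fst p).
Proof.
  destruct lin as [_ [htr htri]].
  induction P as [|x P IH].
  - left; intros p [].
  - destruct IH as [IH|[m [hm1 [hm2 hm3]]]].
    + destruct (classic (Q (fst x))) as [hq|hq].
      * right. exists x. split; [left; auto|split; auto].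
        intros p' [e|e] hp'; [subst; right; auto|]. exfalso; exact (IH p' e hp').
      * left. intros p [e|e]; [subst; auto|auto].
    + destruct (classic (Q (fst x) /\ lt (fst m) (fst x))) as [[hq hl]|hq].
      * right. exists x. split; [left; auto|split; auto].
        intros p' [e|e] hp'; [subst; right; auto|].
        destruct (hm3 p' e hp') as [h|h]; left; [eauto|rewrite h; auto].
      * right. exists m. split; [right; auto|split; auto].
        intros p' [e|e] hp'; [|auto]. subst p'.
        destruct (htri (fst x) (fst m)) as [h|[h|h]]; [right; auto|left; auto|].
        exfalso; auto.
Qed.

Section BF1.
Context {L M : Type} (ltL : L -> L -> Prop) (ltM : M -> M -> Prop) (cL : L -> nat) (cM : M -> nat)
  (linL : strict_linear_order ltL) (linM : strict_linear_order ltM)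
  (denseM : forall u v z, ltM u v -> exists w, cM w = cM z /\ ltM u w /\ ltM w v)
  (realLM : forall x, exists y, cM y = cL x)
  (minLM : forall x, isMin ltL x -> exists y, isMin ltM y /\ cM y = cL x)
  (maxLM : forall x, isMax ltL x -> exists y, isMax ltM y /\ cM y = cL x)
  (ntL : forall x, exists u, ltL u x \/ ltL x u)
  (ntM : forall x, exists u, ltM u x \/ ltM x u).

Notation goodP := (good ltL ltM cL cM).

Lemma irrL x : ~ ltL x x. Proof. apply linL. Qed.
Lemma irrM x : ~ ltM x x. Proof. apply linM. Qed.
Lemma trL x y z : ltL x y -> ltL y z -> ltL x z. Proof. apply linL. Qed.
Lemma trM x y z : ltM x y -> ltM y z -> ltM x z. Proof. apply linM. Qed.
Lemma triL x y : x = y \/ ltL x y \/ ltL y x. Proof. apply linL. Qed.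
Lemma triM x y : x = y \/ ltM x y \/ ltM y x. Proof. apply linM. Qed.

Lemma good_eq P a b a' b' : goodP P -> In (a,b) P -> In (a',b') P -> (a = a' <-> b = b').
Proof.
  intros [h1 _] ha hb. split; intros e.
  - subst a'. destruct (triM b b') as [e|[e|e]]; auto.
    + apply (h1 _ _ _ _ ha hb) in e. exfalso; exact (irrL _ e).
    + apply (h1 _ _ _ _ hb ha) in e. exfalso; exact (irrL _ e).
  - subst b'. destruct (triL a a') as [e|[e|e]]; auto.
    + apply (h1 _ _ _ _ ha hb) in e. exfalso; exact (irrM _ e).
    + apply (h1 _ _ _ _ hb ha) in e. exfalso; exact (irrM _ e).
Qed.

Lemma good_cons_in P a b : goodP P -> In (a,b) P -> goodP ((a,b)::P).
Proof.
  intros [h1 h2] hin. split.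
  - intros x y x' y' [e|e] [e'|e']; try injection e as -> ->; try injection e' as -> ->; eauto.
  - intros x y [e|e]; [injection e as -> ->|]; eauto.
Qed.

Lemma not_min_ex x : ~ isMin ltM x -> exists u, ltM u x.
Proof. intros h; apply NNPP; intros hn; apply h; intros u hu; eauto. Qed.
Lemma not_max_ex x : ~ isMax ltM x -> exists u, ltM x u.
Proof. intros h; apply NNPP; intros hn; apply h; intros u hu; eauto. Qed.

Lemma between u v (a : L) : ltM u v -> exists b, cM b = cL a /\ ltM u b /\ ltM b v /\
   ~ isMin ltM b /\ ~ isMax ltM b.
Proof.
  intros h. destruct (realLM a) as [z hz].
  destruct (denseM u v z h) as [w [h1 [h2 h3]]].
  exists w. repeat split; auto; [rewrite h1; auto| |].
  - intros hm; exact (hm u h2).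
  - intros hm; exact (hm v h3).
Qed.

Lemma good_new P a b : goodP P -> cL a = cM b ->
  (isMin ltL a <-> isMin ltM b) -> (isMax ltL a <-> isMax ltM b) ->
  (forall a' b', In (a',b') P -> a' <> a /\ (ltL a a' -> ltM b b') /\ (ltL a' a -> ltM b' b)) ->
  goodP ((a,b)::P).
Proof.
  intros [g1 g2] hc hmin hmax hcon.
  assert (hiff : forall a' b', In (a',b') P -> (ltL a a' <-> ltM b b') /\ (ltL a' a <-> ltM b' b)).
  { intros a' b' hin. destruct (hcon a' b' hin) as [hne [c1 c2]].
    split; split; auto.
    - intros hb. destruct (triL a a') as [e|[e|e]]; auto.
      + subst; exfalso; apply hne; reflexivity.
      + exfalso. apply (irrM b). eapply trM; [exact hb|apply c2; exact e].
    - intros hb. destruct (triL a a') as [e|[e|e]]; auto.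
      + subst; exfalso; apply hne; reflexivity.
      + exfalso. apply (irrM b). eapply trM; [apply c1; exact e|exact hb]. }
  split.
  - intros x y x' y' [e|e] [e'|e']; try injection e as -> ->; try injection e' as -> ->.
    + split; intros h; [exfalso; exact (irrL _ h)|exfalso; exact (irrM _ h)].
    + apply hiff; auto.
    + apply hiff; auto.
    + eauto.
  - intros x y [e|e]; [injection e as -> ->; auto|eauto].
Qed.

Lemma ext P a : goodP P -> exists b, goodP ((a,b)::P).
Proof.
  intros hg.
  destruct (classic (exists b, In (a,b) P)) as [[b hb]|hnd].
  { exists b. apply good_cons_in; auto. }
  assert (hne : forall a' b', In (a',b') P -> a' <> a).
  { intros a' b' hin e; subst; apply hnd; eauto. }
  destruct (classic (isMin ltL a)) as [hmin|hnmin].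
  { destruct (minLM a hmin) as [y [hy1 hy2]].
    assert (hnx : ~ isMax ltL a).
    { intros hm. destruct (ntL a) as [u [hu|hu]]; [exact (hmin u hu)|exact (hm u hu)]. }
    assert (hny : ~ isMax ltM y).
    { intros hm. destruct (ntM y) as [u [hu|hu]]; [exact (hy1 u hu)|exact (hm u hu)]. }
    exists y. apply good_new; auto; [split; auto|split; intros; contradiction|].
    intros a' b' hin. split; [eauto|]. split.
    - intros _. destruct (triM y b') as [e|[e|e]]; auto.
      + subst b'. exfalso. assert (isMin ltL a') by (apply (proj2 hg a' y hin); auto).
        destruct (triL a a') as [e|[e|e]]; [subst; eapply hne; eauto|exact (H a e)|exact (hmin a' e)].
      + exfalso; exact (hy1 b' e).
    - intros e; exfalso; exact (hmin a' e). }
  destruct (classic (isMax ltL a)) as [hmax|hnmax].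
  { destruct (maxLM a hmax) as [y [hy1 hy2]].
    assert (hny : ~ isMin ltM y).
    { intros hm. destruct (ntM y) as [u [hu|hu]]; [exact (hm u hu)|exact (hy1 u hu)]. }
    exists y. apply good_new; auto; [split; intros; contradiction|split; auto|].
    intros a' b' hin. split; [eauto|]. split.
    - intros e; exfalso; exact (hmax a' e).
    - intros _. destruct (triM y b') as [e|[e|e]]; auto.
      + subst b'. exfalso. assert (isMax ltL a') by (apply (proj2 hg a' y hin); auto).
        destruct (triL a a') as [e|[e|e]]; [subst; eapply hne; eauto|exact (hmax a' e)|exact (H a e)].
      + exfalso; exact (hy1 b' e). }
  assert (key : exists b, cM b = cL a /\ ~ isMin ltM b /\ ~ isMax ltM b /\
     forall a' b', In (a',b') P -> (ltL a a' -> ltM b b') /\ (ltL a' a -> ltM b' b)).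
  { destruct hg as [g1 g2].
    destruct (maxl ltL linL (fun a' => ltL a' a) P) as [hlo|[[l bl] [hl1 [hl2 hl3]]]];
    destruct (maxl (fun x y => ltL y x) (flip_lin _ linL) (fun a' => ltL a a') P)
      as [hhi|[[h bh] [hh1 [hh2 hh3]]]]; simpl in *.
    - destruct (realLM a) as [z hz]. destruct (ntM z) as [v [hv|hv]].
      + destruct (between v z a hv) as [b [b1 [b2 [b3 [b4 b5]]]]].
        exists b; repeat split; auto;
        intros hlt; exfalso; [exact (hhi (a',b') H hlt)|exact (hlo (a',b') H hlt)].
      + destruct (between z v a hv) as [b [b1 [b2 [b3 [b4 b5]]]]].
        exists b; repeat split; auto;
        intros hlt; exfalso; [exact (hhi (a',b') H hlt)|exact (hlo (a',b') H hlt)].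
    - assert (hnm : ~ isMin ltM bh).
      { intros hm. apply (proj1 (proj2 (g2 h bh hh1))) in hm. exact (hm a hh2). }
      destruct (not_min_ex bh hnm) as [v hv].
      destruct (between v bh a hv) as [b [b1 [b2 [b3 [b4 b5]]]]].
      exists b; repeat split; auto.
      + intros hlt. destruct (hh3 (a',b') H hlt) as [e|e]; simpl in e.
        * eapply trM; [exact b3|]. apply (g1 h bh a' b' hh1 H); auto.
        * subst. assert (bh = b') by (eapply (good_eq _ _ _ _ _ (conj g1 g2)); eauto). subst; auto.
      + intros hlt; exfalso; exact (hlo (a',b') H hlt).
    - assert (hnm : ~ isMax ltM bl).
      { intros hm. apply (proj2 (proj2 (g2 l bl hl1))) in hm. exact (hm a hl2). }
      destruct (not_max_ex bl hnm) as [v hv].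
      destruct (between bl v a hv) as [b [b1 [b2 [b3 [b4 b5]]]]].
      exists b; repeat split; auto.
      + intros hlt; exfalso; exact (hhi (a',b') H hlt).
      + intros hlt. destruct (hl3 (a',b') H hlt) as [e|e]; simpl in e.
        * eapply trM; [|exact b2]. apply (g1 a' b' l bl H hl1); auto.
        * subst. assert (bl = b') by (eapply (good_eq _ _ _ _ _ (conj g1 g2)); eauto). subst; auto.
    - assert (hlh : ltM bl bh) by (apply (g1 l bl h bh hl1 hh1); eapply trL; eauto).
      destruct (between bl bh a hlh) as [b [b1 [b2 [b3 [b4 b5]]]]].
      exists b; repeat split; auto.
      + intros hlt. destruct (hh3 (a',b') H hlt) as [e|e]; simpl in e.
        * eapply trM; [exact b3|]. apply (g1 h bh a' b' hh1 H); auto.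
        * subst. assert (bh = b') by (eapply (good_eq _ _ _ _ _ (conj g1 g2)); eauto). subst; auto.
      + intros hlt. destruct (hl3 (a',b') H hlt) as [e|e]; simpl in e.
        * eapply trM; [|exact b2]. apply (g1 a' b' l bl H hl1); auto.
        * subst. assert (bl = b') by (eapply (good_eq _ _ _ _ _ (conj g1 g2)); eauto). subst; auto. }
  destruct key as [b [k1 [k2 [k3 k4]]]].
  exists b. apply good_new; auto.
  - split; intros; contradiction.
  - split; intros; contradiction.
  - intros a' b' hin; split; eauto.
Qed.

End BF1.

Definition swp {L M} (p : L * M) : M * L := (snd p, fst p).

Lemma in_swp {L M} (P : list (L * M)) a b : In (b,a) (map swp P) <-> In (a,b) P.
Proof.
  rewrite in_map_iff. split.
  - intros [[x y] [e h]]. unfold swp in e; simpl in e. injection e as -> ->; auto.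
  - intros h. exists (a,b); auto.
Qed.

Lemma good_swp {L M} ltL ltM (cL : L -> nat) (cM : M -> nat) P :
  good ltL ltM cL cM P -> good ltM ltL cM cL (map swp P).
Proof.
  intros [g1 g2]. split.
  - intros b a b' a' h h'. apply (proj1 (in_swp P a b)) in h.
    apply (proj1 (in_swp P a' b')) in h'. symmetry; eauto.
  - intros b a h. apply (proj1 (in_swp P a b)) in h. destruct (g2 a b h) as [c [d e]].
    split; [symmetry; exact c|split; symmetry; assumption].
Qed.

Lemma good_unswp {L M} ltL ltM (cL : L -> nat) (cM : M -> nat) P :
  good ltM ltL cM cL (map swp P) -> good ltL ltM cL cM P.
Proof.
  intros [g1 g2]. split.
  - intros a b a' b' h h'. apply (proj2 (in_swp P a b)) in h.
    apply (proj2 (in_swp P a' b')) in h'. symmetry; eauto.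
  - intros a b h. apply (proj2 (in_swp P a b)) in h. destruct (g2 b a h) as [c [d e]].
    split; [symmetry; exact c|split; symmetry; assumption].
Qed.

Section BF2.
Context {L M : Type} (ltL : L -> L -> Prop) (ltM : M -> M -> Prop) (cL : L -> nat) (cM : M -> nat)
  (linL : strict_linear_order ltL) (linM : strict_linear_order ltM)
  (eL : L -> nat) (eM : M -> nat)
  (eLi : forall x y, eL x = eL y -> x = y) (eMi : forall x y, eM x = eM y -> x = y)
  (denseL : forall u v z, ltL u v -> exists w, cL w = cL z /\ ltL u w /\ ltL w v)
  (denseM : forall u v z, ltM u v -> exists w, cM w = cM z /\ ltM u w /\ ltM w v)
  (realLM : forall x, exists y, cM y = cL x)
  (realML : forall y, exists x, cL x = cM y)
  (minLM : forall x, isMin ltL x -> exists y, isMin ltM y /\ cM y = cL x)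
  (minML : forall y, isMin ltM y -> exists x, isMin ltL x /\ cL x = cM y)
  (maxLM : forall x, isMax ltL x -> exists y, isMax ltM y /\ cM y = cL x)
  (maxML : forall y, isMax ltM y -> exists x, isMax ltL x /\ cL x = cM y)
  (ntL : forall x, exists u, ltL u x \/ ltL x u)
  (ntM : forall x, exists u, ltM u x \/ ltM x u).

Notation goodP := (good ltL ltM cL cM).

Lemma extb P a : exists b, goodP P -> goodP ((a,b)::P).
Proof.
  destruct (classic (goodP P)) as [h|h].
  - destruct (ext ltL ltM cL cM linL linM denseM realLM minLM maxLM ntL ntM P a h) as [b hb].
    exists b; auto.
  - destruct (realLM a) as [b _]. exists b; intros; contradiction.
Qed.

Lemma exta P b : exists a, goodP P -> goodP ((a,b)::P).
Proof.
  destruct (classic (goodP P)) as [h|h].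
  - destruct (ext ltM ltL cM cL linM linL denseL realML minML maxML ntM ntL (map swp P) b
       (good_swp _ _ _ _ _ h)) as [a ha].
    exists a; intros _. apply good_unswp. exact ha.
  - destruct (realML b) as [a _]. exists a; intros; contradiction.
Qed.

Definition nextb P a := proj1_sig (constructive_indefinite_description _ (extb P a)).
Definition nexta P b := proj1_sig (constructive_indefinite_description _ (exta P b)).

Lemma nextb_ok P a : goodP P -> goodP ((a, nextb P a)::P).
Proof. unfold nextb; destruct constructive_indefinite_description; auto. Qed.
Lemma nexta_ok P b : goodP P -> goodP ((nexta P b, b)::P).
Proof. unfold nexta; destruct constructive_indefinite_description; auto. Qed.

Definition exL n : option L :=
  match excluded_middle_informative (exists a, eL a = n) with
  | left h => Some (proj1_sig (constructive_indefinite_description _ h))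
  | right _ => None end.
Definition exM n : option M :=
  match excluded_middle_informative (exists a, eM a = n) with
  | left h => Some (proj1_sig (constructive_indefinite_description _ h))
  | right _ => None end.

Lemma exL_spec a : exL (eL a) = Some a.
Proof.
  unfold exL. destruct excluded_middle_informative as [h|h].
  - destruct constructive_indefinite_description as [x hx]; simpl. f_equal; auto.
  - exfalso; eauto.
Qed.
Lemma exM_spec a : exM (eM a) = Some a.
Proof.
  unfold exM. destruct excluded_middle_informative as [h|h].
  - destruct constructive_indefinite_description as [x hx]; simpl. f_equal; auto.
  - exfalso; eauto.
Qed.

Definition step1 n P := match exL n with Some a => (a, nextb P a)::P | None => P end.
Definition step2 n P := match exM n with Some b => (nexta P b, b)::P | None => P end.

Fixpoint sq n : list (L * M) :=
  match n with 0 => nil | S n => step2 n (step1 n (sq n)) end.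

Lemma step1_good n P : goodP P -> goodP (step1 n P).
Proof. unfold step1; destruct (exL n); auto using nextb_ok. Qed.
Lemma step2_good n P : goodP P -> goodP (step2 n P).
Proof. unfold step2; destruct (exM n); auto using nexta_ok. Qed.
Lemma step1_in n P x : In x P -> In x (step1 n P).
Proof. unfold step1; destruct (exL n); simpl; auto. Qed.
Lemma step2_in n P x : In x P -> In x (step2 n P).
Proof. unfold step2; destruct (exM n); simpl; auto. Qed.

Lemma sq_good n : goodP (sq n).
Proof.
  induction n; simpl.
  - split; intros; contradiction.
  - apply step2_good, step1_good, IHn.
Qed.

Lemma sq_mono n m x : n <= m -> In x (sq n) -> In x (sq m).
Proof.
  induction 1; auto. intros h; simpl. apply step2_in, step1_in; auto.
Qed.

Lemma coverL a : exists b, In (a,b) (sq (S (eL a))).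
Proof.
  simpl. unfold step1. rewrite exL_spec. eexists. apply step2_in. left; reflexivity.
Qed.
Lemma coverM b : exists a, In (a,b) (sq (S (eM b))).
Proof.
  simpl. unfold step2. rewrite exM_spec. eexists. left; reflexivity.
Qed.

Definition fL a := proj1_sig (constructive_indefinite_description _ (coverL a)).
Definition gM b := proj1_sig (constructive_indefinite_description _ (coverM b)).

Lemma fL_in a n : S (eL a) <= n -> In (a, fL a) (sq n).
Proof.
  intros h. apply (sq_mono _ _ _ h). unfold fL. destruct constructive_indefinite_description; auto.
Qed.
Lemma gM_in b n : S (eM b) <= n -> In (gM b, b) (sq n).
Proof.
  intros h. apply (sq_mono _ _ _ h). unfold gM. destruct constructive_indefinite_description; auto.
Qed.

Theorem back_and_forth : exists (f : L -> M) (g : M -> L),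
  (forall x, g (f x) = x) /\ (forall y, f (g y) = y) /\
  (forall x x', ltL x x' <-> ltM (f x) (f x')) /\ (forall x, cM (f x) = cL x).
Proof.
  exists fL, gM. split; [|split; [|split]].
  - intros x. set (N := S (eL x) + S (eM (fL x))).
    apply (good_eq ltL ltM cL cM linL linM (sq N) _ (fL x) _ (fL x) (sq_good N));
      [apply gM_in|apply fL_in|]; unfold N; auto; lia.
  - intros y. set (N := S (eM y) + S (eL (gM y))).
    apply (good_eq ltL ltM cL cM linL linM (sq N) (gM y) _ (gM y) _ (sq_good N));
      [apply fL_in|apply gM_in|]; unfold N; auto; lia.
  - intros x x'. set (N := S (eL x) + S (eL x')).
    apply (proj1 (sq_good N)); apply fL_in; unfold N; lia.
  - intros x. symmetry. apply (proj2 (sq_good (S (eL x))) x (fL x)). apply fL_in; lia.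
Qed.
End BF2.

Section Pts.
Context (alpha : option nat) (A : nat -> Type) (ltA : forall i, A i -> A i -> Prop)
  (SA : forall i j, A i -> A j -> Prop)
  (Hlin : forall i, below alpha i -> strict_linear_order (ltA i))
  (Hsh : shuffles alpha A ltA SA).

Definition Pt := {p : {i : nat & A i} | below alpha (projT1 p)}.
Definition col (p : Pt) := projT1 (proj1_sig p).
Definition piP (p : Pt) := pi A ltA SA (projT1 (proj1_sig p)) (projT2 (proj1_sig p)).
Definition ltPt (p q : Pt) := strict_subset (piP p) (piP q).
Definition mk i (x : A i) (hi : below alpha i) : Pt := exist _ (existT A i x) hi.

Lemma Pt_ext (p q : Pt) : proj1_sig p = proj1_sig q -> p = q.
Proof. destruct p, q; simpl; intros e. apply subset_eq_compat; auto. Qed.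

Lemma Pt_sub p q : ~ ltPt q p <-> subset (piP p) (piP q).
Proof.
  destruct p as [[i x] hi], q as [[j y] hj]; unfold ltPt, piP; simpl.
  apply (notltP alpha A ltA SA Hlin Hsh); auto.
Qed.

Lemma Pt_lt_nsub p q : ltPt q p <-> ~ subset (piP p) (piP q).
Proof.
  rewrite <- Pt_sub. split; [tauto|apply NNPP].
Qed.

Lemma Pt_inj p q : piP p = piP q -> p = q.
Proof.
  destruct p as [[i x] hi], q as [[j y] hj]; unfold piP; simpl. intros e.
  apply Pt_ext; simpl. apply (L3 alpha A ltA SA Hlin Hsh); auto; rewrite e; intros a h; exact h.
Qed.

Lemma Pt_lin : strict_linear_order ltPt.
Proof.
  split; [|split].
  - intros p; apply ss_irrefl.
  - intros p q r; apply ss_trans.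
  - intros [[i x] hi] [[j y] hj]. unfold ltPt, piP; simpl.
    destruct (tri alpha A ltA SA Hlin Hsh i x j y hi hj) as [h|[h|h]]; auto.
    left. apply Pt_ext; auto.
Qed.

Lemma Pt_dense (h1 : below alpha 1) u v z : ltPt u v ->
  exists w, col w = col z /\ ltPt u w /\ ltPt w v.
Proof.
  destruct u as [[i x] hi], v as [[j y] hj], z as [[k c] hk]; unfold ltPt, piP, col; simpl.
  intros h. destruct (dense alpha A ltA SA Hlin Hsh h1 i j k x y hi hj hk h) as [w [w1 w2]].
  exists (mk k w hk). simpl. auto.
Qed.

Lemma Pt_min i x hi : isMin ltPt (mk i x hi) -> forall x', ~ ltA i x' x.
Proof.
  intros h x' hx. apply (h (mk i x' hi)). unfold ltPt, piP; simpl.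
  apply (L1 alpha A ltA SA Hlin Hsh); auto.
Qed.

Lemma Pt_min' (h1 : below alpha 1) i x hi : (forall x', ~ ltA i x' x) -> isMin ltPt (mk i x hi).
Proof.
  intros h [[j y] hj] hq. unfold ltPt, piP in hq; simpl in hq.
  destruct (dense alpha A ltA SA Hlin Hsh h1 j i i y x hj hi hi hq) as [z [z1 z2]].
  apply (h z). apply (L1 alpha A ltA SA Hlin Hsh); auto.
Qed.

Lemma Pt_max i x hi : isMax ltPt (mk i x hi) -> forall x', ~ ltA i x x'.
Proof.
  intros h x' hx. apply (h (mk i x' hi)). unfold ltPt, piP; simpl.
  apply (L1 alpha A ltA SA Hlin Hsh); auto.
Qed.

Lemma Pt_max' (h1 : below alpha 1) i x hi : (forall x', ~ ltA i x x') -> isMax ltPt (mk i x hi).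
Proof.
  intros h [[j y] hj] hq. unfold ltPt, piP in hq; simpl in hq.
  destruct (dense alpha A ltA SA Hlin Hsh h1 i j i x y hi hj hi hq) as [z [z1 z2]].
  apply (h z). apply (L1 alpha A ltA SA Hlin Hsh); auto.
Qed.

Lemma Pt_nt (h1 : below alpha 1) p : exists u, ltPt u p \/ ltPt p u.
Proof.
  assert (h01 : 0 < 1) by lia.
  destruct (proj1 Hsh 0 1 h01 h1) as [[x0 [x1 _]] _].
  assert (h0 : below alpha 0) by (apply (below_mono alpha 1); auto; lia).
  destruct Pt_lin as [_ [_ htri]].
  destruct (htri p (mk 0 x0 h0)) as [e|[e|e]]; [|eauto|eauto].
  destruct (htri p (mk 1 x1 h1)) as [e'|[e'|e']]; [|eauto|eauto].
  exfalso. subst p. apply (f_equal col) in e'. unfold col in e'; simpl in e'. discriminate.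
Qed.

Lemma Pt_count (Hcnt : forall i, below alpha i -> countable (A i)) :
  exists e : Pt -> nat, forall p q, e p = e q -> p = q.
Proof.
  assert (hex : forall i, exists g : A i -> nat, below alpha i -> forall x y, g x = g y -> x = y).
  { intros i. destruct (classic (below alpha i)) as [h|h].
    - destruct (Hcnt i h) as [g hg]. exists g; auto.
    - exists (fun _ => 0). intros; contradiction. }
  set (g := fun i => proj1_sig (constructive_indefinite_description _ (hex i))).
  assert (hg : forall i, below alpha i -> forall x y, g i x = g i y -> x = y).
  { intros i. unfold g. destruct constructive_indefinite_description; simpl; auto. }
  exists (fun p => to_nat (projT1 (proj1_sig p), g _ (projT2 (proj1_sig p)))).
  intros [[i x] hi] [[j y] hj] e; simpl in e.
  assert (e' : (i, g i x) = (j, g j y)).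
  { rewrite <- (cancel_of_to (i, g i x)), <- (cancel_of_to (j, g j y)). f_equal. exact e. }
  injection e' as e1 e2. subst j. apply Pt_ext; simpl.
  f_equal. apply (hg i hi); auto.
Qed.

Definition LS := limit_structure alpha A ltA SA.

Definition ptof (D : LS) : Pt :=
  let h := constructive_indefinite_description _ (proj2_sig D) in
  let h2 := constructive_indefinite_description _ (proj2 (proj2_sig h)) in
  mk (proj1_sig h) (proj1_sig h2) (proj1 (proj2_sig h)).

Lemma ptof_spec D : piP (ptof D) = proj1_sig D.
Proof.
  unfold ptof. destruct constructive_indefinite_description as [i [hi hl]]; simpl.
  destruct constructive_indefinite_description as [x hx]; simpl.
  unfold piP; simpl. rewrite hx. reflexivity.
Qed.

Definition limof (p : Pt) : LS.
Proof.
  exists (piP p). exists (col p). split; [exact (proj2_sig p)|].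
  exists (projT2 (proj1_sig p)). reflexivity.
Defined.

Lemma limof_proj p : proj1_sig (limof p) = piP p.
Proof. reflexivity. Qed.

Lemma limof_ptof D : limof (ptof D) = D.
Proof.
  destruct D as [D hD]. unfold limof. apply subset_eq_compat. apply ptof_spec.
Qed.

Lemma ptof_limof p : ptof (limof p) = p.
Proof. apply Pt_inj. rewrite ptof_spec. reflexivity. Qed.

Lemma level_col i p : below alpha i -> (in_level A ltA SA i (piP p) <-> col p = i).
Proof.
  intros hi. split.
  - intros [x hx]. assert (e : p = mk i x hi) by (apply Pt_inj; exact hx).
    subst p; reflexivity.
  - destruct p as [[j y] hj]; unfold col; simpl; intros e; subst j.
    exists y; reflexivity.
Qed.

End Pts.

Lemma existT_cast (B : nat -> Type) (s : {j & B j}) i (e : projT1 s = i) :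
  existT B i (@eq_rect nat (projT1 s) B (projT2 s) i e) = s.
Proof. destruct s as [j y]; simpl in e; subst; reflexivity. Qed.

Lemma mk_inj alpha (A : nat -> Type) i (x y : A i) hi hi' : mk alpha A i x hi = mk alpha A i y hi' -> x = y.
Proof.
  intros e. apply (f_equal (@proj1_sig _ _)) in e; simpl in e.
  apply inj_pair2_eq_dec in e; auto using Nat.eq_dec.
Qed.

Lemma iso_min {X Y} (ltX : X -> X -> Prop) (ltY : Y -> Y -> Prop) f x :
  order_iso ltX ltY f -> (forall x', ~ ltX x' x) -> forall y', ~ ltY y' (f x).
Proof.
  intros [[g [hg1 hg2]] hf] hm y' hy. rewrite <- (hg2 y') in hy. apply hf in hy. exact (hm _ hy).
Qed.
Lemma iso_max {X Y} (ltX : X -> X -> Prop) (ltY : Y -> Y -> Prop) f x :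
  order_iso ltX ltY f -> (forall x', ~ ltX x x') -> forall y', ~ ltY (f x) y'.
Proof.
  intros [[g [hg1 hg2]] hf] hm y' hy. rewrite <- (hg2 y') in hy. apply hf in hy. exact (hm _ hy).
Qed.
Lemma iso_inv {X Y} (ltX : X -> X -> Prop) (ltY : Y -> Y -> Prop) f :
  order_iso ltX ltY f -> exists g, order_iso ltY ltX g.
Proof.
  intros [[g [hg1 hg2]] hf]. exists g. split; [exists f; auto|].
  intros y y'. rewrite hf, !hg2. tauto.
Qed.

Section Two.
Context (alpha : option nat)
    (A : nat -> Type) (ltA : forall i, A i -> A i -> Prop) (SA : forall i j, A i -> A j -> Prop)
    (B : nat -> Type) (ltB : forall i, B i -> B i -> Prop) (SB : forall i j, B i -> B j -> Prop)
    (HlinA : forall i, below alpha i -> strict_linear_order (ltA i))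
    (HlinB : forall i, below alpha i -> strict_linear_order (ltB i))
    (HshA : shuffles alpha A ltA SA)
    (HshB : shuffles alpha B ltB SB).

Definition PI := exists (Phi : Pt alpha A -> Pt alpha B) (Psi : Pt alpha B -> Pt alpha A),
  (forall p, Psi (Phi p) = p) /\ (forall q, Phi (Psi q) = q) /\
  (forall p p', ltPt alpha A ltA SA p p' <-> ltPt alpha B ltB SB (Phi p) (Phi p')) /\
  (forall p, col alpha B (Phi p) = col alpha A p).

Definition F2 := exists f : forall i, below alpha i -> A i -> B i,
     (forall i (hi : below alpha i), order_iso (ltA i) (ltB i) (f i hi)) /\
     (forall i j (hi : below alpha i) (hj : below alpha j), i < j ->
        forall (x : A i) (y : A j), SA i j x y <-> SB i j (f i hi x) (f j hj y)).

Lemma pi_to_f : PI -> F2.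
Proof.
  intros [Phi [Psi [h1 [h2 [h3 h4]]]]].
  assert (h4' : forall q, col alpha A (Psi q) = col alpha B q).
  { intros q. rewrite <- (h4 (Psi q)), h2. reflexivity. }
  set (f := fun i (hi : below alpha i) (x : A i) =>
    @eq_rect nat (projT1 (proj1_sig (Phi (mk alpha A i x hi)))) B
       (projT2 (proj1_sig (Phi (mk alpha A i x hi)))) i (h4 (mk alpha A i x hi))).
  set (g := fun i (hi : below alpha i) (y : B i) =>
    @eq_rect nat (projT1 (proj1_sig (Psi (mk alpha B i y hi)))) A
       (projT2 (proj1_sig (Psi (mk alpha B i y hi)))) i (h4' (mk alpha B i y hi))).
  assert (hf : forall i hi x, Phi (mk alpha A i x hi) = mk alpha B i (f i hi x) hi).
  { intros i hi x. apply Pt_ext; simpl. unfold f. symmetry. apply existT_cast. }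
  assert (hg : forall i hi y, Psi (mk alpha B i y hi) = mk alpha A i (g i hi y) hi).
  { intros i hi y. apply Pt_ext; simpl. unfold g. symmetry. apply existT_cast. }
  exists f. split.
  - intros i hi. split.
    + exists (g i hi). split.
      * intros x. apply (mk_inj alpha A i _ _ hi hi). rewrite <- hg, <- hf. apply h1.
      * intros y. apply (mk_inj alpha B i _ _ hi hi). rewrite <- hf, <- hg. apply h2.
    + intros x x'. rewrite (L1 alpha A ltA SA HlinA HshA i x x' hi).
      rewrite (L1 alpha B ltB SB HlinB HshB i (f i hi x) (f i hi x') hi).
      change (ltPt alpha A ltA SA (mk alpha A i x hi) (mk alpha A i x' hi) <->
              ltPt alpha B ltB SB (mk alpha B i (f i hi x) hi) (mk alpha B i (f i hi x') hi)).
      rewrite <- !hf. apply h3.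
  - intros i j hi hj hij x y.
    rewrite (L2 alpha A ltA SA HlinA HshA i j x y hij hj).
    rewrite (L2 alpha B ltB SB HlinB HshB i j (f i hi x) (f j hj y) hij hj).
    change (ltPt alpha A ltA SA (mk alpha A i x hi) (mk alpha A j y hj) <->
            ltPt alpha B ltB SB (mk alpha B i (f i hi x) hi) (mk alpha B j (f j hj y) hj)).
    rewrite <- !hf. apply h3.
Qed.

Lemma f_to_pi : F2 -> PI.
Proof.
  intros [f [hf1 hf2]].
  set (gi := fun i hi => proj1_sig (constructive_indefinite_description _ (proj1 (hf1 i hi)))).
  assert (hgi : forall i hi, (forall x, gi i hi (f i hi x) = x) /\ (forall y, f i hi (gi i hi y) = y)).
  { intros i hi. unfold gi. destruct constructive_indefinite_description; simpl; auto. }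
  exists (fun p => mk alpha B (col alpha A p) (f (col alpha A p) (proj2_sig p) (projT2 (proj1_sig p))) (proj2_sig p)).
  exists (fun q => mk alpha A (col alpha B q) (gi (col alpha B q) (proj2_sig q) (projT2 (proj1_sig q))) (proj2_sig q)).
  split; [|split; [|split]].
  - intros [[i x] hi]. apply Pt_ext; simpl. f_equal. apply hgi.
  - intros [[i x] hi]. apply Pt_ext; simpl. f_equal. apply hgi.
  - intros [[i x] hi] [[j y] hj].
    change (ltP A ltA SA i x j y <-> ltP B ltB SB i (f i hi x) j (f j hj y)).
    destruct (lt_eq_lt_dec i j) as [[e|e]|e].
    + rewrite <- (L2 alpha A ltA SA HlinA HshA i j x y e hj).
      rewrite <- (L2 alpha B ltB SB HlinB HshB i j _ _ e hj). apply hf2; auto.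
    + subst j. rewrite (proof_irrelevance _ hj hi).
      rewrite <- (L1 alpha A ltA SA HlinA HshA i x y hi).
      rewrite <- (L1 alpha B ltB SB HlinB HshB i _ _ hi). apply (proj2 (hf1 i hi)).
    + rewrite <- (L5 alpha A ltA SA HlinA HshA j i y x e hi).
      rewrite <- (L5 alpha B ltB SB HlinB HshB j i _ _ e hi).
      rewrite (hf2 j i hj hi e y x). tauto.
  - intros p; reflexivity.
Qed.

Lemma pi_to_lim : PI -> limits_isomorphic alpha A ltA SA B ltB SB.
Proof.
  intros [Phi [Psi [h1 [h2 [h3 h4]]]]].
  exists (fun D => limof alpha B ltB SB (Phi (ptof alpha A ltA SA D))).
  exists (fun E => limof alpha A ltA SA (Psi (ptof alpha B ltB SB E))).
  split; [|split; [|split]].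
  - intros D. rewrite (ptof_limof alpha B ltB SB HlinB HshB), h1. apply limof_ptof.
  - intros E. rewrite (ptof_limof alpha A ltA SA HlinA HshA), h2. apply limof_ptof.
  - intros D D'. rewrite <- (ptof_spec alpha A ltA SA D), <- (ptof_spec alpha A ltA SA D').
    rewrite !limof_proj.
    rewrite <- (Pt_sub alpha A ltA SA HlinA HshA), <- (Pt_sub alpha B ltB SB HlinB HshB).
    rewrite h3. tauto.
  - intros i hi D. rewrite <- (ptof_spec alpha A ltA SA D). rewrite limof_proj.
    rewrite (level_col alpha A ltA SA HlinA HshA i _ hi).
    rewrite (level_col alpha B ltB SB HlinB HshB i _ hi). rewrite h4. tauto.
Qed.

Lemma lim_to_pi : limits_isomorphic alpha A ltA SA B ltB SB -> PI.
Proof.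
  intros [F [G [hGF [hFG [hsub hlev]]]]].
  exists (fun p => ptof alpha B ltB SB (F (limof alpha A ltA SA p))).
  exists (fun q => ptof alpha A ltA SA (G (limof alpha B ltB SB q))).
  split; [|split; [|split]].
  - intros p. rewrite limof_ptof, hGF. apply (ptof_limof alpha A ltA SA HlinA HshA).
  - intros q. rewrite limof_ptof, hFG. apply (ptof_limof alpha B ltB SB HlinB HshB).
  - intros p p'.
    rewrite (Pt_lt_nsub alpha A ltA SA HlinA HshA p' p).
    rewrite (Pt_lt_nsub alpha B ltB SB HlinB HshB).
    rewrite !ptof_spec.
    rewrite <- (limof_proj alpha A ltA SA p), <- (limof_proj alpha A ltA SA p').
    rewrite hsub. tauto.
  - intros p.
    pose proof (hlev (col alpha A p) (proj2_sig p) (limof alpha A ltA SA p)) as hl.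
    rewrite limof_proj in hl.
    rewrite <- (ptof_spec alpha B ltB SB (F (limof alpha A ltA SA p))) in hl.
    rewrite (level_col alpha A ltA SA HlinA HshA _ _ (proj2_sig p)) in hl.
    rewrite (level_col alpha B ltB SB HlinB HshB _ _ (proj2_sig p)) in hl.
    apply hl. reflexivity.
Qed.

Lemma three_to_pi (h1 : below alpha 1)
    (HcntA : forall i, below alpha i -> countable (A i))
    (HcntB : forall i, below alpha i -> countable (B i))
    (H3 : forall i, below alpha i -> exists f : A i -> B i, order_iso (ltA i) (ltB i) f) : PI.
Proof.
  destruct (Pt_count alpha A HcntA) as [eA heA].
  destruct (Pt_count alpha B HcntB) as [eB heB].
  assert (H3' : forall i, below alpha i -> exists g : B i -> A i, order_iso (ltB i) (ltA i) g).
  { intros i hi. destruct (H3 i hi) as [f hf]. eapply iso_inv; eauto. }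
  unfold PI.
  apply (back_and_forth (ltPt alpha A ltA SA) (ltPt alpha B ltB SB) (col alpha A) (col alpha B)
    (Pt_lin alpha A ltA SA HlinA HshA) (Pt_lin alpha B ltB SB HlinB HshB) eA eB heA heB
    (Pt_dense alpha A ltA SA HlinA HshA h1) (Pt_dense alpha B ltB SB HlinB HshB h1)).
  - intros [[i a] hi]. destruct (H3 i hi) as [f hf]. exists (mk alpha B i (f a) hi). reflexivity.
  - intros [[i a] hi]. destruct (H3' i hi) as [f hf]. exists (mk alpha A i (f a) hi). reflexivity.
  - intros [[i a] hi] hm. destruct (H3 i hi) as [f hf]. exists (mk alpha B i (f a) hi).
    split; [|reflexivity]. apply (Pt_min' alpha B ltB SB HlinB HshB h1).
    apply (iso_min _ _ f a hf). exact (Pt_min alpha A ltA SA HlinA HshA i a hi hm).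
  - intros [[i a] hi] hm. destruct (H3' i hi) as [f hf]. exists (mk alpha A i (f a) hi).
    split; [|reflexivity]. apply (Pt_min' alpha A ltA SA HlinA HshA h1).
    apply (iso_min _ _ f a hf). exact (Pt_min alpha B ltB SB HlinB HshB i a hi hm).
  - intros [[i a] hi] hm. destruct (H3 i hi) as [f hf]. exists (mk alpha B i (f a) hi).
    split; [|reflexivity]. apply (Pt_max' alpha B ltB SB HlinB HshB h1).
    apply (iso_max _ _ f a hf). exact (Pt_max alpha A ltA SA HlinA HshA i a hi hm).
  - intros [[i a] hi] hm. destruct (H3' i hi) as [f hf]. exists (mk alpha A i (f a) hi).
    split; [|reflexivity]. apply (Pt_max' alpha A ltA SA HlinA HshA h1).
    apply (iso_max _ _ f a hf). exact (Pt_max alpha B ltB SB HlinB HshB i a hi hm).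
  - apply (Pt_nt alpha A ltA SA HlinA HshA h1).
  - apply (Pt_nt alpha B ltB SB HlinB HshB h1).
Qed.

End Two.

Theorem proposition2 (alpha : option nat)
    (A : nat -> Type) (ltA : forall i, A i -> A i -> Prop) (SA : forall i j, A i -> A j -> Prop)
    (B : nat -> Type) (ltB : forall i, B i -> B i -> Prop) (SB : forall i j, B i -> B j -> Prop)
    (HlinA : forall i, below alpha i -> strict_linear_order (ltA i))
    (HlinB : forall i, below alpha i -> strict_linear_order (ltB i))
    (HcntA : forall i, below alpha i -> countable (A i))
    (HcntB : forall i, below alpha i -> countable (B i))
    (HshA : shuffles alpha A ltA SA)
    (HshB : shuffles alpha B ltB SB) :
  (limits_isomorphic alpha A ltA SA B ltB SB <->
   exists f : forall i, below alpha i -> A i -> B i,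
     (forall i (hi : below alpha i), order_iso (ltA i) (ltB i) (f i hi)) /\
     (forall i j (hi : below alpha i) (hj : below alpha j), i < j ->
        forall (x : A i) (y : A j), SA i j x y <-> SB i j (f i hi x) (f j hj y))) /\
  ((exists f : forall i, below alpha i -> A i -> B i,
     (forall i (hi : below alpha i), order_iso (ltA i) (ltB i) (f i hi)) /\
     (forall i j (hi : below alpha i) (hj : below alpha j), i < j ->
        forall (x : A i) (y : A j), SA i j x y <-> SB i j (f i hi x) (f j hj y))) <->
   (forall i, below alpha i -> exists f : A i -> B i, order_iso (ltA i) (ltB i) f)).
Proof.
  split; [split|split].
  - intros h. apply (pi_to_f alpha A ltA SA B ltB SB HlinA HlinB HshA HshB).
    apply (lim_to_pi alpha A ltA SA B ltB SB HlinA HlinB HshA HshB h).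
  - intros h. apply (pi_to_lim alpha A ltA SA B ltB SB HlinA HlinB HshA HshB).
    apply (f_to_pi alpha A ltA SA B ltB SB HlinA HlinB HshA HshB h).
  - intros [f [hf _]] i hi. exists (f i hi); auto.
  - intros H3. destruct (classic (below alpha 1)) as [h1|h1].
    + apply (pi_to_f alpha A ltA SA B ltB SB HlinA HlinB HshA HshB).
      apply (three_to_pi alpha A ltA SA B ltB SB HlinA HlinB HshA HshB h1 HcntA HcntB H3).
    + exists (fun i hi => proj1_sig (constructive_indefinite_description _ (H3 i hi))).
      split.
      * intros i hi. destruct constructive_indefinite_description; auto.
      * intros i j hi hj hij. exfalso. apply h1. apply (below_mono alpha j); auto; lia.
Qed.
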